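(* Let $\mathbf D_0\in\mathcal D$ and let $k,t$ satisfy $k\mu(t)<1/2$. Consider the signal model below with the additional assumptions $\sigma=0$ (no noise) and $\Pr(|[\boldsymbol\alpha_0]_j|>\overline\alpha\mid j\in J)=0$ for some $\overline\alpha\ge\underline\alpha>0$. Let $\mathbf x=\mathbf D_0\boldsymbol\alpha_0$ be generated according to this model, with support $J$, and let $\lambda$ satisfy $\frac{\sqrt k\,\overline\alpha}{2-Q_t^2}t<\lambda\le\frac49\underline\alpha$, and $0\le t'\le t$. Then almost surely, uniformly for all $(\mathbf W,\mathbf v)\in\mathcal W_{\mathbf D_0}\times\mathcal S^p$, writing $\mathbf D(t')=\mathbf D(\mathbf W,\mathbf v,t')$: the vector $\hat{\boldsymbol\alpha}(t')$ with $\hat{\boldsymbol\alpha}(t')_J=\big([\mathbf D(t')]_J^\top[\mathbf D(t')]_J\big)^{-1}\big([\mathbf D(t')]_J^\top\mathbf x-\lambda\,\mathrm{sign}([\boldsymbol\alpha_0]_J)\big)$ and $\hat{\boldsymbol\alpha}(t')_{J^c}=\mathbf 0$ is the unique solution of $\min_{\boldsymbol\alpha\in\mathbb R^p}\frac12\|\mathbf x-\mathbf D(t')\boldsymbol\alpha\|_2^2+\lambda\|\boldsymbol\alpha\|_1$, and $\mathrm{sign}(\hat{\boldsymbol\alpha}(t'))=\mathrm{sign}(\boldsymbol\alpha_0)$.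
   Context: $\mathcal D$: real $m\times p$ matrices with unit $\ell_2$-norm columns; $\mu_0=\max_{i\ne j}|[\mathbf d_0^i]^\top\mathbf d_0^j|$, $\mu(t)=\mu_0+3t$, $Q_t=1/\sqrt{1-k\mu(t)}$. $\mathcal S^p$ unit sphere; $\mathcal W_{\mathbf D_0}=\{\mathbf W:\mathrm{diag}(\mathbf W^\top\mathbf D_0)=\mathbf 0,\mathrm{diag}(\mathbf W^\top\mathbf W)=\mathbf 1\}$; $\mathbf D(\mathbf W,\mathbf v,t)=\mathbf D_0\mathrm{Diag}[\cos(\mathbf vt)]+\mathbf W\mathrm{Diag}[\sin(\mathbf vt)]$. Signal model: random support $J$ with $|J|=k$; $[\boldsymbol\alpha_0]_j=0$ off $J$ and, on $J$, i.i.d. copies of $\alpha$ with $\mathbb Ee^{s\alpha}\le e^{c^2s^2/2}$ for all $s$ ($\sigma_\alpha$ smallest such $c$) and $\Pr(|\alpha|<\underline\alpha)=0$; support and coefficients independent. *)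

(* Defs.v *)
From HB Require Import structures.
From mathcomp Require Import all_boot all_order all_algebra.
From mathcomp Require Import all_classical all_reals all_analysis.
Set Implicit Arguments. Unset Strict Implicit. Unset Printing Implicit Defensive.
Import Order.TTheory GRing.Theory Num.Theory.
Local Open Scope classical_set_scope.
Local Open Scope ring_scope.

Section Defs.
Variable R : realType.

Definition coherence (m p : nat) (D0 : 'M[R]_(m, p)) : R :=
  \big[Num.max/0]_(i < p) \big[Num.max/0]_(j < p | i != j) `|(D0^T *m D0) i j|.

Definition mu_t (m p : nat) (D0 : 'M[R]_(m, p)) (t : R) : R := coherence D0 + 3 * t.

Definition Q_t (m p : nat) (k : nat) (D0 : 'M[R]_(m, p)) (t : R) : R :=
  (Num.sqrt (1 - k%:R * mu_t D0 t))^-1.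

Definition unit_columns (m p : nat) (D : 'M[R]_(m, p)) : Prop :=
  forall j : 'I_p, \sum_(i < m) D i j ^+ 2 = 1.

Definition W_set (m p : nat) (D0 W : 'M[R]_(m, p)) : Prop :=
  (forall j : 'I_p, (W^T *m D0) j j = 0) /\ (forall j : 'I_p, (W^T *m W) j j = 1).

Definition unit_sphere (p : nat) (v : 'cV[R]_p) : Prop :=
  \sum_(j < p) v j 0 ^+ 2 = 1.

Definition Dpath (m p : nat) (D0 W : 'M[R]_(m, p)) (v : 'cV[R]_p) (t : R)
  : 'M[R]_(m, p) :=
  D0 *m diag_mx (\row_j cos (v j 0 * t)) + W *m diag_mx (\row_j sin (v j 0 * t)).

(* selection matrix of a support J: columns e_j, j in J (increasing order) *)
Definition selJ (p : nat) (J : {set 'I_p}) : 'M[R]_(p, #|J|) :=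
  \matrix_(j < p, i < #|J|) (j == enum_val i)%:R.

Definition sqnorm2 (n : nat) (y : 'cV[R]_n) : R := \sum_(i < n) y i 0 ^+ 2.
Definition norm1 (n : nat) (y : 'cV[R]_n) : R := \sum_(i < n) `|y i 0|.

Definition lasso (m p : nat) (x : 'cV[R]_m) (D : 'M[R]_(m, p)) (lambda : R)
  (a : 'cV[R]_p) : R :=
  2^-1 * sqnorm2 (x - D *m a) + lambda * norm1 a.

Definition sgn_vec (n : nat) (y : 'cV[R]_n) : 'cV[R]_n := map_mx Num.sg y.

Definition alpha_hat (m p : nat) (D : 'M[R]_(m, p)) (x : 'cV[R]_m)
  (J : {set 'I_p}) (alpha0 : 'cV[R]_p) (lambda : R) : 'cV[R]_p :=
  let DJ := D *m selJ J in
  selJ J *m (invmx (DJ^T *m DJ) *m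
            (DJ^T *m x - lambda *: sgn_vec ((selJ J)^T *m alpha0))).

End Defs.

Definition mutually_independent {d} {Omega : measurableType d} {R : realType}
  (P : probability Omega R) (I : finType) (F : I -> set (set Omega)) : Prop :=
  forall E : I -> set Omega, (forall i, F i (E i)) ->
  forall S : {set I},
    fine (P (\big[setI/setT]_(i in S) E i)) = \prod_(i in S) fine (P (E i)).

Definition signal {Omega : Type} {R : realType} (p : nat) (J : Omega -> {set 'I_p})
  (a : 'I_p -> Omega -> R) (w : Omega) : 'cV[R]_p :=
  \col_j (if j \in J w then a j w else 0).

(* Main.v *)
Require Import Defs.
From HB Require Import structures.
From mathcomp Require Import all_boot all_order all_algebra.
From mathcomp Require Import all_classical all_reals all_analysis.
From mathcomp Require Import ring lra.
Import Order.TTheory GRing.Theory Num.Theory.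
Import numFieldNormedType.Exports.
Local Open Scope classical_set_scope.
Local Open Scope ring_scope.

Set Implicit Arguments. Unset Strict Implicit. Unset Printing Implicit Defensive.

Section L1.
Variable R : realType.

Lemma CSsum (n : nat) (a b : 'I_n -> R) :
  (\sum_i a i * b i) ^+ 2 <= (\sum_i a i ^+ 2) * (\sum_i b i ^+ 2).
Proof.
set T1 := \sum_i \sum_j a i ^+ 2 * b j ^+ 2.
set T2 := \sum_i \sum_j a j ^+ 2 * b i ^+ 2.
set T3 := \sum_i \sum_j a i * b i * (a j * b j).
have E : \sum_i \sum_j (a i * b j - a j * b i) ^+ 2 = T1 + T2 - T3 *+ 2.
  rewrite /T1 /T2 /T3 -sumrMnl -big_split -sumrB /=.
  apply: eq_bigr => i _; rewrite -sumrMnl -big_split -sumrB /=.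
  by apply: eq_bigr => j _; ring.
have E1 : (\sum_i a i ^+ 2) * (\sum_i b i ^+ 2) = T1.
  by rewrite big_distrl /=; apply: eq_bigr => i _; rewrite big_distrr.
have E2 : T2 = T1 by rewrite /T2 exchange_big.
have E3 : (\sum_i a i * b i) ^+ 2 = T3.
  by rewrite expr2 big_distrl /=; apply: eq_bigr => i _; rewrite big_distrr.
have : 0 <= \sum_i \sum_j (a i * b j - a j * b i) ^+ 2.
  by apply: sumr_ge0 => i _; apply: sumr_ge0 => j _; apply: sqr_ge0.
rewrite E E2 => H; rewrite E1 E3 -subr_ge0.
have -> : T1 - T3 = (T1 + T1 - T3 *+ 2) / 2 by rewrite mulr2n; field.
by apply: divr_ge0.
Qed.

Lemma sin_le_pos (x : R) : 0 < x -> `|sin x| <= x.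
Proof.
move=> x0.
have hc : {within `[0, x], continuous (@sin R)}.
  by apply: derivable_within_continuous => z _; exact: ex_derive.
have [c _ Hc] := @MVT R sin cos 0 x x0 (fun y _ => is_derive_sin y) hc.
rewrite sin0 subr0 subr0 in Hc.
rewrite Hc normrM (gtr0_norm x0); apply: ler_piMl; [exact: ltW | exact: cos_max]. Qed.
Lemma abs_sin_le (x : R) : `|sin x| <= `|x|.
Proof.
have [x0|x0|->] := ltgtP x 0; last by rewrite sin0 normr0.
  by rewrite -normrN -sinN (ltr0_norm x0) sin_le_pos // oppr_gt0.
by rewrite (gtr0_norm x0) sin_le_pos.
Qed.
Lemma sqr_le_of_abs (a b : R) : `|a| <= `|b| -> a ^+ 2 <= b ^+ 2.
Proof.
move=> h; rewrite -[a ^+ 2]ger0_norm ?sqr_ge0 // -[b ^+ 2]ger0_norm ?sqr_ge0 //.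
by rewrite !normrX; apply: lerXn2r; rewrite ?nnegrE.
Qed.
Lemma one_m_cos (x : R) : 2 - 2 * cos x <= x ^+ 2.
Proof.
have -> : cos x = 1 - 2 * sin (x / 2) ^+ 2.
  by rewrite -{1}[x](mulfVK (x:=2)) ?pnatr_eq0 // mulr_natr cos_mulr2n cos2sin2 mulr2n; ring.
have := @sqr_le_of_abs _ _ (abs_sin_le (x / 2)).
have -> : (x / 2) ^+ 2 = x ^+ 2 / 4 by field.
lra.
Qed.

Lemma abs_le_of_sqr (a b : R) : 0 <= b -> a ^+ 2 <= b ^+ 2 -> `|a| <= b.
Proof.
move=> b0 h; have [a0|a0] := leP 0 a.
  by rewrite ger0_norm //; nra.
by rewrite ltr0_norm //; nra.
Qed.

Definition dot (n : nat) (u v : 'cV[R]_n) := \sum_i u i 0 * v i 0.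

Lemma dotE n (u v : 'cV[R]_n) : dot u v = (u^T *m v) 0 0.
Proof. by rewrite mxE; apply: eq_bigr => i _; rewrite mxE. Qed.

Lemma dotC n (u v : 'cV[R]_n) : dot u v = dot v u.
Proof. by apply: eq_bigr => i _; rewrite mulrC. Qed.

Lemma dot_ge0 n (u : 'cV[R]_n) : 0 <= dot u u.
Proof. by apply: sumr_ge0 => i _; rewrite -expr2 sqr_ge0. Qed.

Lemma sqnorm2E n (u : 'cV[R]_n) : sqnorm2 u = dot u u.
Proof. by apply: eq_bigr => i _; rewrite expr2. Qed.

Lemma CSdot n (u v : 'cV[R]_n) : dot u v ^+ 2 <= dot u u * dot v v.
Proof.
rewrite /dot; have := CSsum (fun i => u i 0) (fun i => v i 0).
by congr (_ <= _ * _); apply: eq_bigr => i _; rewrite expr2.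
Qed.

Lemma dot_unit_le n (u v : 'cV[R]_n) (eps : R) :
  dot u u = 1 -> 0 <= eps -> dot v v <= eps ^+ 2 -> `|dot u v| <= eps.
Proof.
move=> hu he hv; apply: abs_le_of_sqr => //.
by apply: le_trans (CSdot u v) _; rewrite hu mul1r.
Qed.

Lemma dotDl n (u v w : 'cV[R]_n) : dot (u + v) w = dot u w + dot v w.
Proof. by rewrite /dot -big_split; apply: eq_bigr => i _; rewrite mxE mulrDl. Qed.

Lemma dotNl n (u w : 'cV[R]_n) : dot (- u) w = - dot u w.
Proof. by rewrite /dot -sumrN; apply: eq_bigr => i _; rewrite mxE mulNr. Qed.

Lemma dotBl n (u v w : 'cV[R]_n) : dot (u - v) w = dot u w - dot v w.
Proof. by rewrite dotDl dotNl. Qed.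

Lemma dotDr n (u v w : 'cV[R]_n) : dot w (u + v) = dot w u + dot w v.
Proof. by rewrite dotC dotDl !(dotC w). Qed.

Lemma dotBr n (u v w : 'cV[R]_n) : dot w (u - v) = dot w u - dot w v.
Proof. by rewrite dotC dotBl !(dotC w). Qed.

Lemma dotZl n a (u w : 'cV[R]_n) : dot (a *: u) w = a * dot u w.
Proof. by rewrite /dot big_distrr; apply: eq_bigr => i _; rewrite mxE -mulrA. Qed.

Lemma dot_mull n q (A : 'M[R]_(n, q)) (u : 'cV[R]_q) (w : 'cV[R]_n) :
  dot (A *m u) w = dot u (A^T *m w).
Proof. by rewrite !dotE trmx_mul mulmxA. Qed.

Lemma dot0_eq0 n (u : 'cV[R]_n) : dot u u = 0 -> u = 0.
Proof.
move=> h; apply/matrixP => i j; rewrite (ord1 j) mxE.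
have /allP H : all (fun k => true ==> (u k 0 * u k 0 == 0)) (index_enum 'I_n).
  by rewrite -psumr_eq0; [apply/eqP; exact: h | move=> k _; rewrite -expr2 sqr_ge0].
by move: (H i (mem_index_enum i)); rewrite /= mulf_eq0 orbb => /eqP.
Qed.

Variable p : nat.
Variable J : {set 'I_p}.
Local Notation S := (selJ R J).

Lemma mulS_E q (M : 'M[R]_(q, p)) r i : (M *m S) r i = M r (enum_val i).
Proof.
rewrite !mxE (bigD1 (enum_val i)) //= mxE eqxx mulr1 big1 ?addr0 // => j hj.
by rewrite mxE (negbTE hj) mulr0.
Qed.

Lemma trSmul_E q (M : 'M[R]_(p, q)) i c : (S^T *m M) i c = M (enum_val i) c.
Proof.
rewrite !mxE (bigD1 (enum_val i)) //= !mxE eqxx mul1r big1 ?addr0 // => j hj.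
by rewrite !mxE (negbTE hj) mul0r.
Qed.

Lemma Sy_in (y : 'cV[R]_#|J|) i : (S *m y) (enum_val i) 0 = y i 0.
Proof.
rewrite !mxE (bigD1 i) //= mxE eqxx mul1r big1 ?addr0 // => i' hi.
rewrite mxE; case: eqP => [/enum_val_inj E|_]; last by rewrite mul0r.
by rewrite E eqxx in hi.
Qed.

Lemma Sy_out (y : 'cV[R]_#|J|) j : j \notin J -> (S *m y) j 0 = 0.
Proof.
move=> hj; rewrite !mxE big1 // => i _; rewrite mxE.
case: eqP => [E|_]; last by rewrite mul0r.
by move: hj; rewrite E enum_valP.
Qed.

Lemma S_supp (v : 'cV[R]_p) : (forall j, j \notin J -> v j 0 = 0) ->
  S *m (S^T *m v) = v.
Proof.
move=> hv; apply/matrixP => j c; rewrite (ord1 c).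
have [hj|hj] := boolP (j \in J); last by rewrite Sy_out // hv.
by rewrite -(enum_rankK_in hj hj) Sy_in trSmul_E.
Qed.

Lemma S_in_ex j : j \in J -> exists i : 'I_#|J|, j = enum_val i.
Proof. by move=> hj; exists (enum_rank_in hj j); rewrite enum_rankK_in. Qed.

End L1.

Lemma sg_stable (R : realType) (a d : R) : `|d| < `|a| -> Num.sg (a + d) = Num.sg a.
Proof.
have hd1 : d <= `|d| := ler_norm d.
have hd2 : - d <= `|d| by rewrite -normrN ler_norm.
have [a0|a0|->] := ltgtP a 0; last by rewrite normr0 ltNge normr_ge0.
  rewrite (ltr0_norm a0) => h3; rewrite (ltr0_sg a0) ltr0_sg //; lra.
rewrite (gtr0_norm a0) => h3; rewrite (gtr0_sg a0) gtr0_sg //; lra.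
Qed.

Lemma arith1 (R : realType) (U T V M z : R) :
  T <= z * U -> U - T <= V -> V <= M -> U * (1 - z) <= M.
Proof. move=> h1 h2 h3. have -> : U * (1 - z) = U - z * U by ring. lra. Qed.

Lemma mxBZ (R : realType) q r (A B : 'M[R]_(q, r)) a i j :
  (A - a *: B) i j = A i j - a * B i j.
Proof. by rewrite !mxE. Qed.

Lemma mxD_E (R : realType) q r (A B : 'M[R]_(q, r)) i j :
  (A + B) i j = A i j + B i j.
Proof. by rewrite !mxE. Qed.

Lemma sgnE (R : realType) q (v : 'cV[R]_q) j : (sgn_vec v) j 0 = Num.sg (v j 0).
Proof. by rewrite mxE. Qed.


Lemma dot_sub_sq (R : realType) q (a c : 'cV[R]_q) :
  dot (a - c) (a - c) = dot a a - 2 * dot c a + dot c c.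
Proof. rewrite !dotBl !dotBr (dotC a c); ring. Qed.

Lemma orth_le (R : realType) q (a c : 'cV[R]_q) :
  dot a c = 0 -> dot a a <= dot (a + c) (a + c).
Proof.
move=> h; rewrite !dotDl !dotDr h (dotC c a) h addr0 add0r lerDl; exact: dot_ge0.
Qed.

Lemma lasso_decomp (R : realType) m p (x : 'cV[R]_m) (D : 'M[R]_(m, p)) lam
  (ah b : 'cV[R]_p) :
  lasso x D lam b = lasso x D lam ah +
   (2^-1 * dot (D *m (b - ah)) (D *m (b - ah)) +
    \sum_j (lam * `|b j 0| - lam * `|ah j 0|
            - (b - ah) j 0 * (D^T *m (x - D *m ah)) j 0)).
Proof.
set r := x - D *m ah; set h := b - ah.
have hb : x - D *m b = r - D *m h by rewrite /r /h mulmxBr opprB addrA subrK.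
rewrite /lasso !sqnorm2E hb -/r.
have E1 : dot (r - D *m h) (r - D *m h)
   = dot r r - 2 * dot h (D^T *m r) + dot (D *m h) (D *m h).
  by rewrite dot_sub_sq dot_mull.
have E2 : \sum_j (lam * `|b j 0| - lam * `|ah j 0| - h j 0 * (D^T *m r) j 0)
   = lam * norm1 b - lam * norm1 ah - dot h (D^T *m r).
  by rewrite /norm1 /dot !big_distrr -!sumrB.
by rewrite E1 E2; field.
Qed.

Lemma f_in (R : realType) (lam a bb zz : R) : 0 <= lam -> zz = lam * Num.sg a ->
  0 <= lam * `|bb| - lam * `|a| - (bb - a) * zz.
Proof.
move=> l0 ->.
have E : lam * `|bb| - lam * `|a| - (bb - a) * (lam * Num.sg a)
   = lam * (`|bb| - Num.sg a * bb) + lam * (Num.sg a * a - `|a|) by ring.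
rewrite E -normrEsg subrr mulr0 addr0; apply: mulr_ge0 => //.
rewrite subr_ge0; apply: le_trans (ler_norm _) _.
rewrite normrM; apply: ler_piMl => //.
by rewrite normr_sg; case: (_ != 0).
Qed.

Lemma f_out (R : realType) (lam bb zz : R) :
  `|bb| * (lam - `|zz|) <= lam * `|bb| - lam * `|0 : R| - (bb - 0) * zz.
Proof.
rewrite normr0 mulr0 subr0 subr0.
have : bb * zz <= `|bb| * `|zz| by rewrite -normrM ler_norm.
lra.
Qed.

Lemma mxZ_E (R : realType) q r (A : 'M[R]_(q, r)) a i j :
  (a *: A) i j = a * A i j.
Proof. by rewrite !mxE. Qed.

Lemma mxB_E (R : realType) q r (A B : 'M[R]_(q, r)) i j :
  (A - B) i j = A i j - B i j.
Proof. by rewrite !mxE. Qed.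

Section DL.
Variable R : realType.
Variables (m p : nat) (D : 'M[R]_(m, p)) (J : {set 'I_p}) (x : 'cV[R]_m)
  (al0 : 'cV[R]_p) (lam mu eps alo : R).
Local Notation n := #|J|.
Local Notation S := (selJ R J).
Local Notation DJ := (D *m S).
Local Notation G := (DJ^T *m DJ).
Local Notation Q2 := (1 - n%:R * mu)^-1.

Hypothesis hdiag : forall j, (D^T *m D) j j = 1.
Hypothesis hcoh : forall i j, i \in J -> i != j -> `|(D^T *m D) i j| <= mu.
Hypothesis hmu0 : 0 <= mu.
Hypothesis hnmu : n%:R * mu < 2^-1.

Lemma DtD_sym i j : (D^T *m D) i j = (D^T *m D) j i.
Proof. by rewrite !mxE; apply: eq_bigr => k _; rewrite !mxE mulrC. Qed.

Lemma G_E i i' : G i i' = (D^T *m D) (enum_val i) (enum_val i').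
Proof.
have E : G = S^T *m (D^T *m D) *m S.
  by rewrite trmx_mul !mulmxA.
by rewrite E mulS_E trSmul_E.
Qed.

Lemma G_sym : G^T = G.
Proof. by rewrite trmx_mul trmxK. Qed.

Lemma Gdiag i : G i i = 1.
Proof. by rewrite G_E hdiag. Qed.

Lemma Gcoh i j : i != j -> `|G i j| <= mu.
Proof.
move=> hij; rewrite G_E; apply: hcoh; first exact: enum_valP.
by apply: contra hij => /eqP /enum_val_inj ->.
Qed.

Lemma Q2_facts : 0 < Q2 /\ Q2 < 2 /\ Q2 * (1 - n%:R * mu) = 1 /\ n%:R * mu * Q2 = Q2 - 1.
Proof.
have hn := hnmu; have hm0 := hmu0.
have h1 : 2^-1 < 1 - n%:R * mu by lra.
have h0 : 0 < 1 - n%:R * mu by lra.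
have hm : Q2 * (1 - n%:R * mu) = 1 by rewrite mulVf // gt_eqF.
have hQ0 : 0 < Q2 by rewrite invr_gt0.
split => //; split; last by split => //; lra.
set q := Q2 in hm hQ0 *; set z := n%:R * mu in hm h1 h0 *.
nra.
Qed.

Lemma diagdom (u : 'cV[R]_n) (M : R) :
  (forall i, `|(G *m u) i 0| <= M) -> forall i, `|u i 0| <= M * Q2.
Proof.
move=> hM i.
case: (@arg_maxP _ R _ i predT (fun k => `|u k 0|) isT) => i0 _ Hm.
have [hQ0 [_ [hQ _]]] := Q2_facts.
have key : `|u i0 0| * (1 - n%:R * mu) <= M.
  have E : (G *m u) i0 0 = u i0 0 + \sum_(j | j != i0) G i0 j * u j 0.
    by rewrite mxE (bigD1 i0) //= Gdiag mul1r.
  have B : `|\sum_(j | j != i0) G i0 j * u j 0| <= n%:R * mu * `|u i0 0|.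
    apply: le_trans (ler_norm_sum _ _ _) _.
    apply: (@le_trans _ _ (\sum_(j | j != i0) mu * `|u i0 0|)).
      apply: ler_sum => j hj; rewrite normrM; apply: ler_pM => //.
      - by apply: Gcoh; rewrite eq_sym.
      - exact: Hm.
    apply: (@le_trans _ _ (\sum_j mu * `|u i0 0|)).
      rewrite [X in _ <= X](bigD1 i0) //= lerDr.
      by apply: mulr_ge0.
    rewrite sumr_const (_ : #|_| = n); last exact: card_ord.
    by rewrite -[X in X <= _]mulr_natl mulrA.
  have := lerB_normD (u i0 0) (\sum_(j | j != i0) G i0 j * u j 0).
  rewrite -E => H1; have := hM i0 => H2.
  exact: arith1 B H1 H2.
apply: le_trans (Hm i isT) _.
have -> : `|u i0 0| = `|u i0 0| * (1 - n%:R * mu) * Q2.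
  by rewrite -mulrA [_ * Q2]mulrC hQ mulr1.
by apply: ler_wpM2r => //; exact: ltW.
Qed.

Lemma G_unit : G \in unitmx.
Proof.
rewrite unitmxE unitfE; apply/negP => /det0P [v hv0 hv].
have hu : forall i, `|v^T i 0| <= 0 * Q2.
  apply: diagdom => i.
  have E : G *m v^T = (v *m G)^T by rewrite !trmx_mul !trmxK.
  rewrite E.
  by rewrite hv !mxE normr0.
move/negP: hv0; apply; apply/eqP/matrixP => i j.
rewrite (ord1 i) mxE; have := hu j; rewrite mul0r mxE normr_le0 => /eqP ->.
by [].
Qed.


Hypothesis hsupp : forall j, j \notin J -> al0 j 0 = 0.
Hypothesis heps0 : 0 <= eps.
Local Notation a0J := (S^T *m al0).
Local Notation e := (x - DJ *m a0J).
Hypothesis heps : dot e e <= eps ^+ 2.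
Hypothesis hlam : eps < lam * (2 - Q2).
Hypothesis hlo : forall j, j \in J -> alo <= `|al0 j 0|.
Hypothesis hlam2 : lam <= 4 / 9 * alo.

Local Notation s := (sgn_vec a0J).
Local Notation Gi := (invmx G).
Local Notation w := (Gi *m (DJ^T *m e)).
Local Notation g := (Gi *m s).
Local Notation dl := (w - lam *: g).
Local Notation y := (Gi *m (DJ^T *m x - lam *: s)).
Local Notation ah := (alpha_hat D x J al0 lam).

Lemma ah_E : ah = S *m y.
Proof. by []. Qed.

Lemma y_E : y = a0J + dl.
Proof.
have hx : x = DJ *m a0J + e by rewrite addrC subrK.
have -> : DJ^T *m x - lam *: s = G *m a0J + (DJ^T *m e - lam *: s).
  by rewrite {1}hx mulmxDr mulmxA addrA.
by rewrite mulmxDr mulKmx ?G_unit // mulmxBr -scalemxAr.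
Qed.

Lemma Gdl : G *m dl = DJ^T *m e - lam *: s.
Proof. by rewrite mulmxBr -scalemxAr !mulKVmx ?G_unit. Qed.

Lemma DtE (v : 'cV[R]_m) j : (D^T *m v) j 0 = dot (col j D) v.
Proof. by rewrite mxE; apply: eq_bigr => k _; rewrite !mxE. Qed.

Lemma colD j : dot (col j D) (col j D) = 1.
Proof. by rewrite -(hdiag j) mxE; apply: eq_bigr => k _; rewrite !mxE. Qed.

Lemma DJte_bd i : `|(DJ^T *m e) i 0| <= eps.
Proof.
rewrite trmx_mul -(mulmxA (selJ R J)^T) trSmul_E DtE; apply: dot_unit_le => //; exact: colD.
Qed.

Lemma s_bd i : `|s i 0| <= 1.
Proof. by rewrite sgnE normr_sg; case: (_ != 0). Qed.

Lemma w_bd i : `|w i 0| <= eps * Q2.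
Proof.
apply: diagdom => k; rewrite mulKVmx ?G_unit //; exact: DJte_bd.
Qed.

Lemma g_bd i : `|g i 0| <= Q2.
Proof.
rewrite -[Q2]mul1r; apply: diagdom => k; rewrite mulKVmx ?G_unit //; exact: s_bd.
Qed.

Lemma lam_gt0 : 0 < lam.
Proof.
have [hQ0 [hQ2 _]] := Q2_facts.
have h1 := hlam; have h2 := heps0.
rewrite ltNge; apply/negP => hl.
have : lam * (2 - Q2) <= 0 by apply: mulr_le0_ge0 => //; lra.
lra.
Qed.

Lemma dl_bd i : `|dl i 0| < alo.
Proof.
have [hQ0 [hQ2 _]] := Q2_facts.
have l0 := lam_gt0.
have h1 : `|dl i 0| <= eps * Q2 + lam * Q2.
  rewrite mxBZ; apply: le_trans (ler_normB _ _) _.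
  apply: lerD; first exact: w_bd.
  by rewrite normrM (gtr0_norm l0); apply: ler_wpM2l; [exact: ltW|exact: g_bd].
apply: le_lt_trans h1 _.
have h2 : eps * Q2 < lam * (2 - Q2) * Q2 by rewrite ltr_pM2r.
have h3 : 0 <= lam * (Q2 - 3 / 2) ^+ 2 by apply: mulr_ge0; [exact: ltW|exact: sqr_ge0].
have h4 := hlam2.
set q := Q2 in h2 h3 hQ0 hQ2 *.
have E2 : lam * (q - 3 / 2) ^+ 2 = 9 / 4 * lam - (lam * (2 - q) * q + lam * q) by field.
rewrite E2 in h3.
lra.
Qed.

Lemma sign_y i : Num.sg (y i 0) = Num.sg (a0J i 0).
Proof.
rewrite y_E mxD_E; apply: sg_stable.
apply: (lt_le_trans (dl_bd i)); rewrite trSmul_E; apply: hlo; exact: enum_valP.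
Qed.

Lemma sgn_ah : sgn_vec ah = sgn_vec al0.
Proof.
apply/matrixP => j c; rewrite (ord1 c) ah_E !sgnE.
have [hj|hj] := boolP (j \in J); last by rewrite Sy_out // hsupp.
by have [i ->] := S_in_ex hj; rewrite Sy_in sign_y trSmul_E.
Qed.

Local Notation r := (x - D *m ah).
Local Notation u := (e - DJ *m w).

Lemma r_E : r = u + lam *: (DJ *m g).
Proof.
rewrite ah_E mulmxA y_E mulmxDr mulmxBr -scalemxAr.
by rewrite opprD opprB !addrA addrAC.
Qed.

Lemma DJtu : DJ^T *m u = 0.
Proof. by rewrite mulmxBr (mulmxA (D *m S)^T (D *m S)) mulKVmx ?G_unit // subrr. Qed.

Lemma dot0r q (v : 'cV[R]_q) : dot v 0 = 0.
Proof. by rewrite /dot big1 // => i _; rewrite mxE mulr0. Qed.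

Lemma u_bd : dot u u <= eps ^+ 2.
Proof.
apply: le_trans heps.
have he : e = u + DJ *m w by rewrite subrK.
have h0 : dot u (DJ *m w) = 0 by rewrite dotC dot_mull DJtu dot0r.
by have := orth_le h0; rewrite -he.
Qed.

Lemma z_in i : (D^T *m r) (enum_val i) 0 = lam * s i 0.
Proof.
rewrite -trSmul_E mulmxA -trmx_mul r_E mulmxDr DJtu add0r -scalemxAr (mulmxA (D *m S)^T (D *m S)).
by rewrite mulKVmx ?G_unit // mxE.
Qed.

Lemma z_out j : j \notin J -> `|(D^T *m r) j 0| < lam.
Proof.
move=> hj.
have [hQ0 [hQ2 [_ hnQ]]] := Q2_facts.
have l0 := lam_gt0; have hl := hlam.
rewrite r_E mulmxDr mxD_E -scalemxAr mxZ_E.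
have b1 : `|(D^T *m u) j 0| <= eps.
  by rewrite DtE; apply: dot_unit_le => //; [exact: colD|exact: u_bd].
have b2 : `|(D^T *m (DJ *m g)) j 0| <= Q2 - 1.
  rewrite mulmxA mulmxA mxE -hnQ.
  apply: le_trans (ler_norm_sum _ _ _) _.
  apply: (@le_trans _ _ (\sum_(i < n) mu * Q2)); last first.
    by rewrite sumr_const (_ : #|_| = n); [rewrite -[X in X <= _]mulr_natl mulrA | exact: card_ord].
  apply: ler_sum => i _; rewrite mulS_E normrM; apply: ler_pM => //.
  - rewrite DtD_sym; apply: hcoh; first exact: enum_valP.
    by apply: contraNneq hj => <-; exact: enum_valP.
  - exact: g_bd.
apply: le_lt_trans (ler_normD _ _) _.
rewrite normrM (gtr0_norm l0).
have : lam * `|(D^T *m (DJ *m g)) j 0| <= lam * (Q2 - 1) by apply: ler_wpM2l => //; exact: ltW.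
lra.
Qed.

Lemma DL_main :
  [/\ forall b, lasso x D lam ah <= lasso x D lam b,
      forall b, lasso x D lam b <= lasso x D lam ah -> b = ah
    & sgn_vec ah = sgn_vec al0].
Proof.
have l0 := lam_gt0.
have fge0 : forall (b : 'cV[R]_p) j, 0 <= lam * `|b j 0| - lam * `|ah j 0|
            - (b - ah) j 0 * (D^T *m r) j 0.
  move=> b j; rewrite mxB_E.
  have [hj|hj] := boolP (j \in J).
    have [i ->] := S_in_ex hj; apply: f_in; first exact: ltW.
    by rewrite z_in ah_E Sy_in sign_y sgnE.
  have h0 : ah j 0 = 0 by rewrite ah_E Sy_out.
  rewrite h0; apply: le_trans (f_out _ _ _).
  by apply: mulr_ge0 => //; rewrite subr_ge0 ltW // z_out.
have extra_ge0 : forall b : 'cV[R]_p, 0 <= 2^-1 * dot (D *m (b - ah)) (D *m (b - ah)) +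
    \sum_j (lam * `|b j 0| - lam * `|ah j 0| - (b - ah) j 0 * (D^T *m r) j 0).
  move=> b; apply: addr_ge0; first by apply: mulr_ge0; [|exact: dot_ge0].
  by apply: sumr_ge0 => j _; exact: fge0.
split; last exact: sgn_ah.
  by move=> b; rewrite (lasso_decomp x D lam ah b) lerDl.
move=> b; rewrite (lasso_decomp x D lam ah b) gerDl => hle.
have hz : 2^-1 * dot (D *m (b - ah)) (D *m (b - ah)) +
    \sum_j (lam * `|b j 0| - lam * `|ah j 0| - (b - ah) j 0 * (D^T *m r) j 0) = 0.
  by apply/eqP; rewrite eq_le hle extra_ge0.
have hs0 : 0 <= \sum_j (lam * `|b j 0| - lam * `|ah j 0| - (b - ah) j 0 * (D^T *m r) j 0).
  by apply: sumr_ge0 => j _; exact: fge0.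
have hd0 : 0 <= 2^-1 * dot (D *m (b - ah)) (D *m (b - ah)).
  by apply: mulr_ge0; [|exact: dot_ge0].
have /andP [hA hB] : (2^-1 * dot (D *m (b - ah)) (D *m (b - ah)) == 0) &&
   (\sum_j (lam * `|b j 0| - lam * `|ah j 0| - (b - ah) j 0 * (D^T *m r) j 0) == 0).
  by rewrite -paddr_eq0 // hz.
have hsum := eqP hB.
have hdot : dot (D *m (b - ah)) (D *m (b - ah)) = 0.
  by move: hA; rewrite mulf_eq0 invr_eq0 pnatr_eq0 /= => /eqP.
have hsupph : forall j, j \notin J -> (b - ah) j 0 = 0.
  move=> j hj.
  have h0 : ah j 0 = 0 by rewrite ah_E Sy_out.
  have /allP H : all (fun k => true ==> (lam * `|b k 0| - lam * `|ah k 0|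
      - (b - ah) k 0 * (D^T *m r) k 0 == 0)) (index_enum 'I_p).
    by rewrite -psumr_eq0; [apply/eqP; exact: hsum | move=> k _; exact: fge0].
  have /eqP hf := H j (mem_index_enum j).
  have := f_out lam (b j 0) ((D^T *m r) j 0).
  rewrite -h0 -(mxB_E b ah) hf => hle2.
  have hz' := z_out hj.
  have hpos : 0 < lam - `|(D^T *m r) j 0| by rewrite subr_gt0.
  have hbj : `|b j 0| <= 0.
    move: hle2 hpos (normr_ge0 (b j 0)).
    set A := `|b j 0|; set B := lam - _ => h1 h2 h3; nra.
  by move: hbj; rewrite normr_le0 => /eqP hb; rewrite mxB_E hb h0 subrr.
have hh : b - ah = S *m (S^T *m (b - ah)) by rewrite S_supp.
have hDJ : DJ *m (S^T *m (b - ah)) = 0.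
  by apply: dot0_eq0; rewrite -mulmxA -hh.
have hJ0 : S^T *m (b - ah) = 0.
  apply/matrixP => i c; rewrite (ord1 c) [RHS]mxE.
  have H := @diagdom (S^T *m (b - ah)) 0.
  have H' : forall k, `|(G *m (S^T *m (b - ah))) k 0| <= 0.
    by move=> k; rewrite -mulmxA hDJ mulmx0 mxE normr0.
  by apply/eqP; rewrite -normr_le0 -(mul0r Q2); apply: H.
by apply/eqP; rewrite -subr_eq0 hh hJ0 mulmx0.
Qed.

End DL.

Section L3.
Variable R : realType.

Lemma trmul_dot q n1 n2 (A : 'M[R]_(q, n1)) (B : 'M[R]_(q, n2)) i j :
  (A^T *m B) i j = dot (col i A) (col j B).
Proof. by rewrite mxE; apply: eq_bigr => k _; rewrite !mxE. Qed.

Lemma dotZr q a (u w : 'cV[R]_q) : dot w (a *: u) = a * dot w u.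
Proof. by rewrite dotC dotZl dotC. Qed.

Lemma Dpath_col m p (D0 W : 'M[R]_(m, p)) (v : 'cV[R]_p) t j :
  col j (Dpath D0 W v t) = cos (v j 0 * t) *: col j D0 + sin (v j 0 * t) *: col j W.
Proof.
apply/matrixP => r c; rewrite /Dpath !mul_mx_diag !mxE.
by rewrite [cos _ * _]mulrC [sin _ * _]mulrC.
Qed.

Lemma gram_path m p (D0 W : 'M[R]_(m, p)) (v : 'cV[R]_p) t i j :
  ((Dpath D0 W v t)^T *m Dpath D0 W v t) i j =
  cos (v i 0 * t) * cos (v j 0 * t) * dot (col i D0) (col j D0)
  + cos (v i 0 * t) * sin (v j 0 * t) * dot (col i D0) (col j W)
  + sin (v i 0 * t) * cos (v j 0 * t) * dot (col i W) (col j D0)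
  + sin (v i 0 * t) * sin (v j 0 * t) * dot (col i W) (col j W).
Proof.
rewrite trmul_dot !Dpath_col !dotDl !dotDr !dotZl !dotZr; ring.
Qed.

Lemma lerP3 (x y z X Y Z : R) : 0 <= x -> 0 <= y -> 0 <= z ->
  x <= X -> y <= Y -> z <= Z -> x * y * z <= X * Y * Z.
Proof.
move=> x0 y0 z0 hx hy hz; apply: ler_pM => //; first exact: mulr_ge0.
exact: ler_pM.
Qed.

Lemma bound4 (c1 c2 s1 s2 g a b h co tt : R) :
  `|c1| <= 1 -> `|c2| <= 1 -> `|s1| <= tt -> `|s2| <= tt -> `|g| <= co ->
  `|a| <= 1 -> `|b| <= 1 -> `|h| <= 1 -> 0 <= tt -> tt <= 1 ->
  `|c1 * c2 * g + c1 * s2 * a + s1 * c2 * b + s1 * s2 * h| <= co + 3 * tt.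
Proof.
move=> hc1 hc2 hs1 hs2 hg ha hb hh t0 t1.
have n1 := normr_ge0 c1; have n2 := normr_ge0 c2; have n3 := normr_ge0 s1.
have n4 := normr_ge0 s2; have n5 := normr_ge0 g; have n6 := normr_ge0 a.
have n7 := normr_ge0 b; have n8 := normr_ge0 h.
have e1 : `|c1 * c2 * g| <= co.
  by rewrite !normrM; apply: le_trans (lerP3 n1 n2 n5 hc1 hc2 hg) _; rewrite !mul1r.
have e2 : `|c1 * s2 * a| <= tt.
  by rewrite !normrM; apply: le_trans (lerP3 n1 n4 n6 hc1 hs2 ha) _; rewrite mul1r mulr1.
have e3 : `|s1 * c2 * b| <= tt.
  by rewrite !normrM; apply: le_trans (lerP3 n3 n2 n7 hs1 hc2 hb) _; rewrite !mulr1.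
have e4 : `|s1 * s2 * h| <= tt.
  rewrite !normrM; apply: le_trans (lerP3 n3 n4 n8 hs1 hs2 hh) _; rewrite mulr1.
  by rewrite -[X in _ <= X]mulr1; apply: ler_wpM2l.
apply: le_trans (ler_normD _ _) _.
have := ler_normD (c1 * c2 * g + c1 * s2 * a) (s1 * c2 * b).
have := ler_normD (c1 * c2 * g) (c1 * s2 * a).
lra.
Qed.

Lemma coh_le m p (D0 : 'M[R]_(m, p)) i j : i != j ->
  `|(D0^T *m D0) i j| <= coherence D0.
Proof.
move=> hij; rewrite /coherence.
apply: (le_trans _ (le_bigmax 0 (fun i => \big[Num.max/0]_(j | i != j) `|(D0^T *m D0) i j|) i)).
exact: (le_bigmax_cond 0 (P := fun j => i != j) (fun j => `|(D0^T *m D0) i j|) hij).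
Qed.

Lemma coh_ge0 m p (D0 : 'M[R]_(m, p)) : 0 <= coherence D0.
Proof. exact: bigmax_ge_id. Qed.

Lemma v_bd p (v : 'cV[R]_p) j : unit_sphere v -> `|v j 0| <= 1.
Proof.
move=> hv; apply: abs_le_of_sqr => //; rewrite expr1n -hv.
rewrite (bigD1 j) //= lerDl; apply: sumr_ge0 => k _; exact: sqr_ge0.
Qed.

Lemma sin_bd (a t : R) : 0 <= t -> `|a| <= 1 -> `|sin (a * t)| <= t.
Proof.
move=> t0 ha; apply: le_trans (abs_sin_le _) _.
rewrite normrM (ger0_norm t0) -[X in _ <= X]mul1r; exact: ler_wpM2r.
Qed.

Lemma e_bound q n (F : 'M[R]_(q, n)) (c : 'cV[R]_n) :
  dot (F *m c) (F *m c) <= dot c c * \sum_i \sum_r F r i ^+ 2.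
Proof.
rewrite exchange_big /= big_distrr /=.
apply: ler_sum => r _; rewrite mxE -expr2.
have := CSsum (fun i => F r i) (fun i => c i 0).
by rewrite mulrC; congr (_ <= _ * _).
Qed.

Lemma col_diff_sq q (d w : 'cV[R]_q) (x : R) :
  dot d d = 1 -> dot w d = 0 -> dot w w = 1 ->
  dot (d - (cos x *: d + sin x *: w)) (d - (cos x *: d + sin x *: w)) <= x ^+ 2.
Proof.
move=> h1 h2 h3; apply: le_trans (one_m_cos x).
rewrite dot_sub_sq !dotDl !dotDr !dotZl !dotZr (dotC d w) h1 h2 h3.
have := cos2Dsin2 x; set c := cos x; set s := sin x => E.
lra.
Qed.

Lemma sum_enum_le p (J : {set 'I_p}) (f : 'I_p -> R) : (forall j, 0 <= f j) ->
  \sum_(i < #|J|) f (enum_val i) <= \sum_j f j.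
Proof.
move=> f0; rewrite -big_enum_val big_mkcond /=.
by apply: ler_sum => j _; case: ifP.
Qed.

End L3.

Unset Implicit Arguments. Set Strict Implicit.

Lemma deterministic (R : realType) (m p k : nat) (D0 : 'M[R]_(m, p))
  (hD0 : unit_columns D0) (t : R)
  (hkt : k%:R * mu_t D0 t < 2^-1)
  (Jw : {set 'I_p}) (al0 : 'cV[R]_p) (hk : #|Jw| = k)
  (alo ahi : R) (halo : 0 < alo) (hlohi : alo <= ahi)
  (hsupp : forall j, j \notin Jw -> al0 j 0 = 0)
  (hal : forall j, j \in Jw -> alo <= `|al0 j 0| /\ `|al0 j 0| <= ahi)
  (lambda t' : R)
  (hlam1 : Num.sqrt k%:R * ahi / (2 - Q_t k D0 t ^+ 2) * t < lambda)
  (hlam2 : lambda <= 4 / 9 * alo)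
  (ht' : 0 <= t' <= t) (W : 'M[R]_(m, p)) (v : 'cV[R]_p) :
  W_set D0 W -> unit_sphere v ->
  let D := Dpath D0 W v t' in
  let x := D0 *m al0 in
  let ah := alpha_hat D x Jw al0 lambda in
  [/\ forall b : 'cV[R]_p, lasso x D lambda ah <= lasso x D lambda b,
      forall b : 'cV[R]_p, lasso x D lambda b <= lasso x D lambda ah -> b = ah
    & sgn_vec ah = sgn_vec al0].
Proof.
move=> [hW1 hW2] hv D x ah.
have [t'0 t't] := andP ht'.
have t0 : 0 <= t by apply: le_trans t't.
set mu := mu_t D0 t.
have hcoh0 := coh_ge0 D0.
have hmu0 : 0 <= mu by rewrite /mu /mu_t; apply: addr_ge0 => //; apply: mulr_ge0.
have hD0c j : dot (col j D0) (col j D0) = 1.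
  by rewrite /dot -(hD0 j); apply: eq_bigr => i _; rewrite !mxE expr2.
have hWD j : dot (col j W) (col j D0) = 0 by rewrite -trmul_dot hW1.
have hWW j : dot (col j W) (col j W) = 1 by rewrite -trmul_dot hW2.
have hdiag j : (D^T *m D) j j = 1.
  rewrite /D gram_path hD0c hWW (dotC (col j D0)) hWD.
  by rewrite !mulr0 !addr0 !mulr1 -!expr2 cos2Dsin2.
have hcoh i j : i \in Jw -> i != j -> `|(D^T *m D) i j| <= mu.
  move=> hi hij.
  have kpos : (0 < k)%N by rewrite -hk; apply/card_gt0P; exists i.
  have k1 : 1 <= k%:R :> R by rewrite ler1n.
  have t1 : t' <= 1.
    have : mu <= k%:R * mu by rewrite -[X in X <= _]mul1r ler_wpM2r.
    rewrite /mu /mu_t => h; have := hkt; rewrite -/mu_t -/mu => h2.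
    move: h h2; rewrite /mu /mu_t; lra.
  have u1 : `|dot (col i D0) (col j W)| <= 1.
    by apply: dot_unit_le => //; rewrite expr1n hWW.
  have u2 : `|dot (col i W) (col j D0)| <= 1.
    by apply: dot_unit_le => //; rewrite expr1n hD0c.
  have u3 : `|dot (col i W) (col j W)| <= 1.
    by apply: dot_unit_le => //; rewrite expr1n hWW.
  have g0 : `|dot (col i D0) (col j D0)| <= coherence D0.
    by rewrite -trmul_dot; exact: coh_le.
  rewrite /D gram_path.
  apply: le_trans (bound4 (cos_max _) (cos_max _) (sin_bd t'0 (v_bd i hv))
      (sin_bd t'0 (v_bd j hv)) g0 u1 u2 u3 t'0 t1) _.
  by rewrite /mu /mu_t lerD2l ler_wpM2l.
have hnmu : #|Jw|%:R * mu < 2^-1 by rewrite hk.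
have ahi0 : 0 <= ahi by apply: le_trans hlohi; exact: ltW.
set eps := Num.sqrt k%:R * ahi * t.
have heps0 : 0 <= eps by rewrite /eps !mulr_ge0 // sqrtr_ge0.
have [hQ0 [hQ2 _]] := Q2_facts hmu0 hnmu.
have hQt : Q_t k D0 t ^+ 2 = (1 - #|Jw|%:R * mu)^-1.
  rewrite hk /Q_t exprVn sqr_sqrtr //; rewrite hk in hnmu; lra.
have hlam : eps < lambda * (2 - (1 - #|Jw|%:R * mu)^-1).
  rewrite hQt in hlam1.
  have hpos : 0 < 2 - (1 - #|Jw|%:R * mu)^-1 by lra.
  have -> : eps = Num.sqrt k%:R * ahi / (2 - (1 - #|Jw|%:R * mu)^-1) * t
      * (2 - (1 - #|Jw|%:R * mu)^-1).
    rewrite /eps; field; apply/andP; split; apply/negP => /eqP H; lra.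
  by rewrite ltr_pM2r.
have hlo j : j \in Jw -> alo <= `|al0 j 0| by move=> hj; case: (hal j hj).
set S := selJ R Jw.
have heps : dot (x - D *m S *m (S^T *m al0)) (x - D *m S *m (S^T *m al0)) <= eps ^+ 2.
  have he : x - D *m S *m (S^T *m al0) = ((D0 - D) *m S) *m (S^T *m al0).
    by rewrite /x -{1}(S_supp hsupp) !mulmxBl !mulmxA.
  rewrite he; apply: le_trans (e_bound _ _) _.
  have c1 : dot (S^T *m al0) (S^T *m al0) <= k%:R * ahi ^+ 2.
    rewrite /dot; apply: (@le_trans _ _ (\sum_(i < #|Jw|) ahi ^+ 2)).
      apply: ler_sum => i _; rewrite trSmul_E -expr2; apply: sqr_le_of_abs.
      by rewrite (ger0_norm ahi0); case: (hal _ (enum_valP i)).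
    by rewrite sumr_const card_ord hk mulr_natl.
  have c2 : \sum_i \sum_r ((D0 - D) *m S) r i ^+ 2 <= t ^+ 2.
    apply: (@le_trans _ _ (\sum_(i < #|Jw|) (v (enum_val i) 0 * t') ^+ 2)).
      apply: ler_sum => i _.
      have := col_diff_sq (v (enum_val i) 0 * t') (hD0c (enum_val i))
        (hWD (enum_val i)) (hWW (enum_val i)).
      rewrite -Dpath_col -/D => H; apply: le_trans H.
      by rewrite le_eqVlt; apply/orP; left; apply/eqP; rewrite /dot;
        apply: eq_bigr => r _; rewrite mulS_E !mxE expr2.
    apply: le_trans (@sum_enum_le R p Jw (fun j => (v j 0 * t') ^+ 2) _) _.
      by move=> j; exact: sqr_ge0.
    under eq_bigr do rewrite exprMn.
    rewrite -big_distrl /= hv mul1r.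
    by apply: lerXn2r; rewrite ?nnegrE.
  apply: le_trans (ler_pM _ _ c1 c2) _.
  - exact: dot_ge0.
  - by apply: sumr_ge0 => i _; apply: sumr_ge0 => r _; exact: sqr_ge0.
  by rewrite /eps !exprMn sqr_sqrtr ?ler0n.
have := DL_main hdiag hcoh hmu0 hnmu hsupp heps0 heps hlam hlo hlam2.
by [].
Qed.

Theorem proposition4 (R : realType) (m p k : nat) (D0 : 'M[R]_(m, p))
  (hD0 : unit_columns D0) (t : R)
  (hkt : k%:R * mu_t D0 t < 2^-1)
  (d : measure_display) (Omega : measurableType d) (P : probability Omega R)
  (J : Omega -> {set 'I_p}) (a : 'I_p -> Omega -> R)
  (hJk : forall w, #|J w| = k)
  (hJmeas : forall S : {set 'I_p}, measurable (J @^-1` [set S]))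
  (hJunif : forall S : {set 'I_p}, #|S| = k ->
     fine (P (J @^-1` [set S])) = ('C(p, k)%:R)^-1)
  (ha_meas : forall j, measurable_fun setT (a j))
  (ha_id : forall j j' (B : set R), measurable B ->
     P (a j @^-1` B) = P (a j' @^-1` B))
  (hindep : mutually_independent P
     (fun o : option 'I_p => match o with
        | None => [set E | exists A : set {set 'I_p}, E = J @^-1` A]
        | Some j => [set E | exists B : set R, measurable B /\ E = a j @^-1` B]
        end))
  (c : R)
  (hsubg : forall j (s : R),
     (\int[P]_w (expR (s * a j w))%:E <= (expR (c ^+ 2 * s ^+ 2 / 2))%:E)%E)
  (alo ahi : R) (halo : 0 < alo) (hlohi : alo <= ahi)
  (hlow : forall j, P [set w | `|a j w| < alo] = 0%E)
  (hhigh : forall j, P [set w | j \in J w /\ ahi < `|signal J a w j 0|] = 0%E)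
  (lambda t' : R)
  (hlam1 : Num.sqrt k%:R * ahi / (2 - Q_t k D0 t ^+ 2) * t < lambda)
  (hlam2 : lambda <= 4 / 9 * alo)
  (ht' : 0 <= t' <= t) :
  {ae P, forall w, forall (W : 'M[R]_(m, p)) (v : 'cV[R]_p),
     W_set D0 W -> unit_sphere v ->
     let D := Dpath D0 W v t' in
     let x := D0 *m signal J a w in
     let ah := alpha_hat D x (J w) (signal J a w) lambda in
     [/\ forall b : 'cV[R]_p, lasso x D lambda ah <= lasso x D lambda b,
         forall b : 'cV[R]_p, lasso x D lambda b <= lasso x D lambda ah -> b = ah
       & sgn_vec ah = sgn_vec (signal J a w)]}.
Proof.
have A1 : forall j, {ae P, forall w, alo <= `|a j w|}.
  move=> j; exists [set w | `|a j w| < alo]; split.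
  - have -> : [set w | `|a j w| < alo] = a j @^-1` `](- alo), alo[%classic.
      by apply/seteqP; split => w /=; rewrite in_itv /= ltr_norml.
    by rewrite -[X in measurable X]setTI; apply: ha_meas => //; exact: measurable_itv.
  - exact: hlow.
  - by move=> w /= /negP; rewrite -ltNge.
have A2 : forall j, {ae P, forall w, j \in J w -> `|a j w| <= ahi}.
  move=> j; exists [set w | j \in J w /\ ahi < `|signal J a w j 0|]; split.
  - have -> : [set w | j \in J w /\ ahi < `|signal J a w j 0|] =
        (J @^-1` [set S : {set 'I_p} | j \in S]) `&` (a j @^-1` (~` `[- ahi, ahi]%classic)).
      apply/seteqP; split => w /=.
        move=> [hj h]; split => //; move: h; rewrite /signal mxE hj => h.
        by rewrite /= in_itv /= -ler_norml; apply/negP; rewrite -ltNge.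
      move=> [hj h]; split => //; move: h; rewrite /signal mxE hj.
      by rewrite /= in_itv /= -ler_norml ltNge => /negP.
    apply: measurableI.
      have -> : J @^-1` [set S : {set 'I_p} | j \in S] =
          \bigcup_(S in [set S : {set 'I_p} | j \in S]) J @^-1` [set S].
        apply/seteqP; split => [w hw|w [S hS hw]]; first by exists (J w).
        by rewrite /preimage /= hw.
      by apply: fin_bigcup_measurable; [exact: finite_finset | move=> S _; exact: hJmeas].
    rewrite -[X in measurable X]setTI; apply: ha_meas => //.
    by apply: measurableC; exact: measurable_itv.
  - exact: hhigh.
  - move=> w /= h; case hj : (j \in J w); last by exfalso; apply: h; rewrite hj.
    split => //; rewrite /signal mxE hj ltNge; apply/negP => h2; apply: h => _.
    exact: h2.
have Hn : forall n : nat, {ae P, forall w, forall j : 'I_p, val j = n ->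
    alo <= `|a j w| /\ (j \in J w -> `|a j w| <= ahi)}.
  move=> n; case: (ltnP n p) => hn.
    apply: filterS (filterI (A1 (Ordinal hn)) (A2 (Ordinal hn))).
    move=> w [h1 h2] j hj; have -> : j = Ordinal hn by apply: val_inj.
    by split.
  apply: aeW => w j hj; exfalso; have := ltn_ord j; rewrite hj ltnNge hn.
  by [].
apply: filterS (ae_foralln Hn) => w Hw W v hW hv.
have hs : forall j, j \notin J w -> signal J a w j 0 = 0.
  by move=> j hj; rewrite /signal mxE (negbTE hj).
have hal : forall j, j \in J w ->
    alo <= `|signal J a w j 0| /\ `|signal J a w j 0| <= ahi.
  move=> j hj; have [h1 h2] := Hw (val j) j erefl.
  by rewrite /signal mxE hj; split => //; exact: h2.
exact: (@deterministic R m p k D0 hD0 t hkt (J w) (signal J a w) (hJk w) alo ahi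
  halo hlohi hs hal lambda t' hlam1 hlam2 ht' W v hW hv).
Qed.
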